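(* Let $H:=\{(s,t)\in\mathbb{R}^2: t\ge 0\}$, equipped with the metric induced by the supremum norm $\|(a,b)\|_\infty=\max\{|a|,|b|\}$ on $\mathbb{R}^2$. Then $H$ admits two distinct reversible conical bicombings.
   Context: A bicombing on a metric space $(X,d)$ is a map $\sigma\colon X\times X\times[0,1]\to X$ such that each $\sigma_{xy}:=\sigma(x,y,\cdot)$ is a geodesic from $x$ to $y$ ($\sigma_{xy}(0)=x$, $\sigma_{xy}(1)=y$, $d(\sigma_{xy}(s),\sigma_{xy}(t))=|s-t|d(x,y)$). It is conical if $d(\sigma_{xy}(t),\sigma_{x'y'}(t))\le(1-t)d(x,x')+t\,d(y,y')$ for all $x,y,x',y'$, $t\in[0,1]$, and reversible if $\sigma_{xy}(t)=\sigma_{yx}(1-t)$ for all $x,y,t$. *)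

(* Defs.v *)
From Stdlib Require Import Reals.
Open Scope R_scope.

Definition I01 : Type := {t : R | 0 <= t <= 1}.
Definition tval (t : I01) : R := proj1_sig t.

Lemma I01_0_prf : 0 <= 0 <= 1. Proof. split; [apply Rle_refl | apply Rle_0_1]. Qed.
Lemma I01_1_prf : 0 <= 1 <= 1. Proof. split; [apply Rle_0_1 | apply Rle_refl]. Qed.
Definition t0 : I01 := exist _ 0 I01_0_prf.
Definition t1 : I01 := exist _ 1 I01_1_prf.

Section Bicombing.
Variable X : Type.
Variable d : X -> X -> R.

Definition is_bicombing (sigma : X -> X -> I01 -> X) : Prop :=
  forall x y : X,
    sigma x y t0 = x /\ sigma x y t1 = y /\
    (forall s t : I01,
        d (sigma x y s) (sigma x y t) = Rabs (tval s - tval t) * d x y).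

Definition is_conical (sigma : X -> X -> I01 -> X) : Prop :=
  forall (x y x' y' : X) (t : I01),
    d (sigma x y t) (sigma x' y' t) <= (1 - tval t) * d x x' + tval t * d y y'.

Lemma I01_rev_prf (t : I01) : 0 <= 1 - tval t <= 1.
Proof. destruct t as [t [h0 h1]]; simpl; split.
  - apply Rge_le, Rge_minus, Rle_ge, h1.
  - rewrite <- (Rminus_0_r 1) at 2. apply Rplus_le_compat_l, Ropp_le_contravar, h0.
Qed.
Definition I01_rev (t : I01) : I01 := exist _ (1 - tval t) (I01_rev_prf t).

Definition is_reversible (sigma : X -> X -> I01 -> X) : Prop :=
  forall (x y : X) (t : I01), sigma x y t = sigma y x (I01_rev t).

Definition reversible_conical_bicombing (sigma : X -> X -> I01 -> X) : Prop :=
  is_bicombing sigma /\ is_conical sigma /\ is_reversible sigma.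
End Bicombing.

Definition H : Type := {p : R * R | 0 <= snd p}.
Definition dinf (p q : R * R) : R :=
  Rmax (Rabs (fst p - fst q)) (Rabs (snd p - snd q)).
Definition dH (p q : H) : R := dinf (proj1_sig p) (proj1_sig q).

(* Main.v *)
Require Import Defs.
From Stdlib Require Import Reals Lra ProofIrrelevance.
Open Scope R_scope.

Ltac splitall :=
  unfold Rmax, Rabs in *;
  repeat match goal with
  | |- context [Rle_dec ?a ?b] => destruct (Rle_dec a b)
  | |- context [Rcase_abs ?a] => destruct (Rcase_abs a)
  | H : context [Rle_dec ?a ?b] |- _ => destruct (Rle_dec a b)
  | H : context [Rcase_abs ?a] |- _ => destruct (Rcase_abs a)
  end; lra.

Definition N3 (a b c : R) := Rmax (Rabs a) (Rmax (Rabs b) (Rabs c)).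
Definition lin (l u v : R) := (1 - l) * u + l * v.
Definition phi (k a b c : R) : R * R := (a, Rmax b (k * (c - Rabs a))).
Definition pt (k : R) (x y : R * R) (l : R) : R * R :=
  phi k (lin l (fst x) (fst y)) (lin l (snd x) (snd y))
        (lin l (Rabs (fst x)) (Rabs (fst y))).

Lemma L1 p q p' q' : Rabs (Rmax p q - Rmax p' q') <= Rmax (Rabs (p - p')) (Rabs (q - q')).
Proof. splitall. Qed.

Lemma L2 k a c a' c' : 0 <= k <= 1/2 ->
  Rabs (k * (c - Rabs a) - k * (c' - Rabs a')) <= Rmax (Rabs (a - a')) (Rabs (c - c')).
Proof.
  intros Hk.
  replace (k * (c - Rabs a) - k * (c' - Rabs a')) with (k * ((c - c') - (Rabs a - Rabs a'))) by ring.
  rewrite Rabs_mult, (Rabs_pos_eq k) by lra.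
  assert (HX : Rabs ((c - c') - (Rabs a - Rabs a')) <= 2 * Rmax (Rabs (a - a')) (Rabs (c - c'))) by splitall.
  assert (0 <= Rabs ((c - c') - (Rabs a - Rabs a'))) by apply Rabs_pos.
  nra.
Qed.

Lemma phi_lip k a b c a' b' c' : 0 <= k <= 1/2 ->
  dinf (phi k a b c) (phi k a' b' c') <= N3 (a - a') (b - b') (c - c').
Proof.
  intros Hk. unfold dinf, phi, N3; simpl.
  apply Rmax_lub; [apply Rmax_l|].
  eapply Rle_trans; [apply L1|].
  apply Rmax_lub.
  - eapply Rle_trans; [|apply Rmax_r]. apply Rmax_l.
  - eapply Rle_trans; [apply L2; exact Hk|].
    apply Rmax_lub; [apply Rmax_l|].
    eapply Rle_trans; [|apply Rmax_r]. apply Rmax_r.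
Qed.

Lemma lin_conic l u v u' v' : 0 <= l <= 1 ->
  Rabs (lin l u v - lin l u' v') <= (1 - l) * Rabs (u - u') + l * Rabs (v - v').
Proof.
  intros Hl. unfold lin.
  replace ((1 - l) * u + l * v - ((1 - l) * u' + l * v')) with ((1 - l) * (u - u') + l * (v - v')) by ring.
  eapply Rle_trans; [apply Rabs_triang|].
  rewrite !Rabs_mult, (Rabs_pos_eq l), (Rabs_pos_eq (1 - l)) by lra. lra.
Qed.

Lemma N3_dinf x x' : N3 (fst x - fst x') (snd x - snd x') (Rabs (fst x) - Rabs (fst x')) = dinf x x'.
Proof.
  unfold N3, dinf. pose proof (Rabs_triang_inv2 (fst x) (fst x')). splitall.
Qed.

Lemma pt_conic k x y x' y' l : 0 <= k <= 1/2 -> 0 <= l <= 1 ->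
  dinf (pt k x y l) (pt k x' y' l) <= (1 - l) * dinf x x' + l * dinf y y'.
Proof.
  intros Hk Hl. unfold pt. eapply Rle_trans; [apply phi_lip; exact Hk|].
  rewrite <- !N3_dinf. unfold N3.
  pose proof (lin_conic l (fst x) (fst y) (fst x') (fst y') Hl).
  pose proof (lin_conic l (snd x) (snd y) (snd x') (snd y') Hl).
  pose proof (lin_conic l (Rabs (fst x)) (Rabs (fst y)) (Rabs (fst x')) (Rabs (fst y')) Hl).
  set (A1 := Rabs (fst x - fst x')) in *. set (A2 := Rabs (snd x - snd x')) in *.
  set (A3 := Rabs (Rabs (fst x) - Rabs (fst x'))) in *.
  set (B1 := Rabs (fst y - fst y')) in *. set (B2 := Rabs (snd y - snd y')) in *.
  set (B3 := Rabs (Rabs (fst y) - Rabs (fst y'))) in *.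
  assert (A1 <= Rmax A1 (Rmax A2 A3)) by apply Rmax_l.
  assert (A2 <= Rmax A1 (Rmax A2 A3)) by (eapply Rle_trans; [apply Rmax_l|apply Rmax_r]).
  assert (A3 <= Rmax A1 (Rmax A2 A3)) by (eapply Rle_trans; [apply Rmax_r|apply Rmax_r]).
  assert (B1 <= Rmax B1 (Rmax B2 B3)) by apply Rmax_l.
  assert (B2 <= Rmax B1 (Rmax B2 B3)) by (eapply Rle_trans; [apply Rmax_l|apply Rmax_r]).
  assert (B3 <= Rmax B1 (Rmax B2 B3)) by (eapply Rle_trans; [apply Rmax_r|apply Rmax_r]).
  repeat apply Rmax_lub; nra.
Qed.

Lemma lin_geo l m u v : Rabs (lin l u v - lin m u v) = Rabs (l - m) * Rabs (u - v).
Proof.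
  unfold lin. rewrite (Rabs_minus_sym u v), <- Rabs_mult. f_equal. ring.
Qed.

Lemma pt_geo_le k x y l m : 0 <= k <= 1/2 ->
  dinf (pt k x y l) (pt k x y m) <= Rabs (l - m) * dinf x y.
Proof.
  intros Hk. unfold pt. eapply Rle_trans; [apply phi_lip; exact Hk|].
  rewrite <- N3_dinf. unfold N3. rewrite !lin_geo, !RmaxRmult by apply Rabs_pos.
  right; reflexivity.
Qed.

Lemma dinf_tri p q r : dinf p r <= dinf p q + dinf q r.
Proof.
  unfold dinf.
  pose proof (Rabs_triang (fst p - fst q) (fst q - fst r)).
  pose proof (Rabs_triang (snd p - snd q) (snd q - snd r)).
  replace (fst p - fst q + (fst q - fst r)) with (fst p - fst r) in * by ring.
  replace (snd p - snd q + (snd q - snd r)) with (snd p - snd r) in * by ring.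
  splitall.
Qed.

Lemma dinf_sym p q : dinf p q = dinf q p.
Proof. unfold dinf. rewrite (Rabs_minus_sym (fst p)), (Rabs_minus_sym (snd p)). reflexivity. Qed.

Lemma pt_0 k x : 0 <= snd x -> forall y, pt k x y 0 = x.
Proof.
  intros Hx y. destruct x as [s t]. simpl in Hx. unfold pt, phi, lin; simpl.
  f_equal; [ring|].
  replace ((1 - 0) * t + 0 * snd y) with t by ring.
  replace (k * ((1 - 0) * Rabs s + 0 * Rabs (fst y) - Rabs ((1 - 0) * s + 0 * fst y))) with 0
    by (replace ((1 - 0) * s + 0 * fst y) with s by ring; ring).
  unfold Rmax; destruct (Rle_dec t 0); lra.
Qed.

Lemma pt_1 k y : 0 <= snd y -> forall x, pt k x y 1 = y.
Proof.
  intros Hy x. destruct y as [s t]. simpl in Hy. unfold pt, phi, lin; simpl.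
  f_equal; [ring|].
  replace ((1 - 1) * snd x + 1 * t) with t by ring.
  replace (k * ((1 - 1) * Rabs (fst x) + 1 * Rabs s - Rabs ((1 - 1) * fst x + 1 * s))) with 0
    by (replace ((1 - 1) * fst x + 1 * s) with s by ring; ring).
  unfold Rmax; destruct (Rle_dec t 0); lra.
Qed.

Lemma pt_geo k x y l m : 0 <= k <= 1/2 -> 0 <= snd x -> 0 <= snd y ->
  0 <= l <= 1 -> 0 <= m <= 1 ->
  dinf (pt k x y l) (pt k x y m) = Rabs (l - m) * dinf x y.
Proof.
  intros Hk Hx Hy.
  assert (Hgen : forall l m, 0 <= l <= m -> m <= 1 ->
    dinf (pt k x y l) (pt k x y m) = Rabs (l - m) * dinf x y).
  { intros l0 m0 H1 H2. apply Rle_antisym; [apply pt_geo_le; exact Hk|].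
    pose proof (dinf_tri (pt k x y 0) (pt k x y l0) (pt k x y 1)).
    pose proof (dinf_tri (pt k x y l0) (pt k x y m0) (pt k x y 1)).
    pose proof (pt_geo_le k x y 0 l0 Hk).
    pose proof (pt_geo_le k x y m0 1 Hk).
    rewrite (pt_0 k x Hx), (pt_1 k y Hy) in *.
    rewrite (Rabs_left1 (l0 - m0)) by lra.
    rewrite (Rabs_left1 (0 - l0)) in * by lra.
    rewrite (Rabs_left1 (m0 - 1)) in * by lra. lra. }
  intros Hl Hm. destruct (Rle_dec l m).
  - apply Hgen; lra.
  - rewrite dinf_sym, Rabs_minus_sym. apply Hgen; lra.
Qed.

Lemma pt_nonneg k x y l : 0 <= snd x -> 0 <= snd y -> 0 <= l <= 1 -> 0 <= snd (pt k x y l).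
Proof.
  intros Hx Hy Hl. unfold pt, phi, lin; simpl.
  eapply Rle_trans; [|apply Rmax_l]. nra.
Qed.

Definition sig (k : R) (x y : H) (t : I01) : H :=
  exist _ (pt k (proj1_sig x) (proj1_sig y) (tval t))
    (pt_nonneg k _ _ _ (proj2_sig x) (proj2_sig y) (proj2_sig t)).

Lemma H_eq (p q : H) : proj1_sig p = proj1_sig q -> p = q.
Proof.
  destruct p, q; simpl; intros ->. f_equal. apply proof_irrelevance.
Qed.

Lemma sig_good k : 0 <= k <= 1/2 -> reversible_conical_bicombing H dH (sig k).
Proof.
  intros Hk. split; [|split].
  - intros x y. split; [|split].
    + apply H_eq. simpl. apply pt_0. exact (proj2_sig x).
    + apply H_eq. simpl. apply pt_1. exact (proj2_sig y).
    + intros s t. unfold dH; simpl. apply pt_geo; auto.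
      exact (proj2_sig x). exact (proj2_sig y). exact (proj2_sig s). exact (proj2_sig t).
  - intros x y x' y' t. unfold dH; simpl. apply pt_conic; auto. exact (proj2_sig t).
  - intros x y t. apply H_eq. simpl. unfold pt, phi, lin.
    f_equal; [ring|]. f_equal; [ring|]. f_equal. f_equal; [ring|]. f_equal. ring.
Qed.

Lemma half_prf : 0 <= 1/2 <= 1. Proof. lra. Qed.

Theorem proposition1p4 :
  exists sigma1 sigma2 : H -> H -> I01 -> H,
    reversible_conical_bicombing H dH sigma1 /\
    reversible_conical_bicombing H dH sigma2 /\
    sigma1 <> sigma2.
Proof.
  exists (sig 0), (sig (1/2)). split; [apply sig_good; lra|]. split; [apply sig_good; lra|].
  intros E.
  assert (Hx : 0 <= snd ((-1), 0)) by (simpl; lra).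
  set (x := exist (fun p : R * R => 0 <= snd p) ((-1), 0) Hx : H).
  assert (Hy : 0 <= snd (1, 0)) by (simpl; lra).
  set (y := exist (fun p : R * R => 0 <= snd p) (1, 0) Hy : H).
  set (h := exist (fun t => 0 <= t <= 1) (1/2) half_prf : I01).
  assert (E2 := f_equal (fun f => snd (proj1_sig (f x y h))) E).
  simpl in E2. unfold lin in E2.
  replace ((1 - 1/2) * -1 + 1/2 * 1) with 0 in E2 by field.
  replace ((1 - 1/2) * 0 + 1/2 * 0) with 0 in E2 by field.
  rewrite Rabs_R0, (Rabs_left (-1)), Rabs_R1 in E2 by lra.
  unfold Rmax in E2. destruct (Rle_dec 0 _), (Rle_dec 0 _); lra.
Qed.
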